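(* For every integer $a\geq 1$, $$\sum_{n=1}^{\infty}\frac{(-1)^n\widetilde H_{n-1}^{(2a)}}{n}=\frac12\zeta(2a+1)-\Big(a+\frac12\Big)\widetilde\zeta(2a+1)+\ln 2\,\zeta(2a)+\sum_{j=1}^{a-1}\widetilde\zeta(2j+1)\zeta(2a-2j),$$ where an empty sum equals $0$.
   Context: For integers $b\geq 1$: $\widetilde H_0^{(b)}=0$ and $\widetilde H_n^{(b)}=\sum_{k=1}^{n}\frac{(-1)^{k-1}}{k^b}$ for $n\geq 1$. For real $s>1$, $\widetilde\zeta(s)=\sum_{n\geq 1}\frac{(-1)^{n-1}}{n^s}$, and $\zeta$ is the Riemann zeta function. The series on the left converges (conditionally). *)

(* Defs.v *)
From Stdlib Require Import Reals.
From Coquelicot Require Import Coquelicot.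
Open Scope R_scope.

Definition altH (b n : nat) : R :=
  sum_n_m (fun k => (-1) ^ (k - 1) / (INR k) ^ b) 1 n.

Definition zeta (s : nat) : R := Series (fun m => / (INR (S m)) ^ s).

Definition altzeta (s : nat) : R :=
  Series (fun m => (-1) ^ m / (INR (S m)) ^ s).

(* Main.v *)
Require Import Defs.
From Stdlib Require Import Reals Lra Lia.
From Coquelicot Require Import Coquelicot.
Open Scope R_scope.


Ltac toR := match goal with |- @eq _ ?a ?b => change (@eq R a b) end.
Ltac Rring := toR; ring.
Ltac Rfield := toR; field.

Lemma series_lim (a : nat -> R) (l : R) : is_series a l <-> is_lim_seq (sum_n a) l.
Proof. split; intro H; exact H. Qed.

Lemma sum_ext (u v : nat -> R) n m : (forall k, u k = v k) -> sum_n_m u n m = sum_n_m v n m.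
Proof. apply sum_n_m_ext. Qed.

Lemma sum_ext_loc (u v : nat -> R) n m : (forall k, (n <= k <= m)%nat -> u k = v k) -> sum_n_m u n m = sum_n_m v n m.
Proof. apply sum_n_m_ext_loc. Qed.

Lemma sum_n_m_shift (f : nat -> R) (n m s : nat) :
  sum_n_m f (n + s) (m + s) = sum_n_m (fun t => f (t + s)%nat) n m.
Proof.
  revert f n m; induction s; intros f n m.
  - rewrite !Nat.add_0_r. apply sum_n_m_ext; intro t; now rewrite Nat.add_0_r.
  - replace (n + S s)%nat with (S (n + s)) by lia.
    replace (m + S s)%nat with (S (m + s)) by lia.
    rewrite <- sum_n_m_S. rewrite (IHs (fun n0 => f (S n0))).
    apply sum_n_m_ext; intro t; f_equal; lia.
Qed.

Lemma sum_n_m_rev (f : nat -> R) (n : nat) :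
  sum_n_m f 1 n = sum_n_m (fun t => f (S n - t)%nat) 1 n.
Proof.
  induction n.
  - rewrite !sum_n_m_zero by lia; reflexivity.
  - rewrite sum_n_Sm by lia. rewrite (sum_Sn_m _ 1 (S n)) by lia.
    rewrite IHn.
    replace (sum_n_m (fun t : nat => f (S (S n) - t)%nat) 2 (S n))
      with (sum_n_m (fun t : nat => f (S n - t)%nat) 1 n).
    + replace (S (S n) - 1)%nat with (S n) by lia.
      unfold plus; simpl; ring.
    + rewrite <- sum_n_m_S. apply sum_n_m_ext; intro t; f_equal; lia.
Qed.

Lemma sum_n_pad (a : nat -> R) (K : nat) : a 0%nat = 0 ->
  sum_n a K = sum_n_m a 1 K.
Proof.
  intro H0. unfold sum_n. destruct K.
  - rewrite sum_n_n, sum_n_m_zero; auto.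
  - rewrite sum_Sn_m by lia. rewrite H0. unfold plus; simpl; ring.
Qed.

Lemma sum_n_m_Rplus (u v : nat -> R) n m :
  sum_n_m (fun k => u k + v k) n m = sum_n_m u n m + sum_n_m v n m.
Proof. apply (sum_n_m_plus u v). Qed.

Lemma sum_n_m_Rmult_l (c : R) (u : nat -> R) n m :
  sum_n_m (fun k => c * u k) n m = c * sum_n_m u n m.
Proof. apply (sum_n_m_mult_l c u). Qed.

Lemma sum_n_m_Ropp (u : nat -> R) n m :
  sum_n_m (fun k => - u k) n m = - sum_n_m u n m.
Proof.
  transitivity (sum_n_m (fun k => (-1) * u k) n m).
  - apply sum_ext; intro; ring.
  - rewrite sum_n_m_Rmult_l; Rring.
Qed.

Lemma sum_n_m_Rminus (u v : nat -> R) n m :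
  sum_n_m (fun k => u k - v k) n m = sum_n_m u n m - sum_n_m v n m.
Proof.
  unfold Rminus. rewrite sum_n_m_Rplus, sum_n_m_Ropp. Rring.
Qed.

Lemma sum_n_m_Sr (u : nat -> R) n m : (n <= S m)%nat ->
  sum_n_m u n (S m) = sum_n_m u n m + u (S m).
Proof. intro H. rewrite sum_n_Sm by exact H. reflexivity. Qed.

Lemma sum_n_m_Sl (u : nat -> R) n m : (n <= m)%nat ->
  sum_n_m u n m = u n + sum_n_m u (S n) m.
Proof. intro H. rewrite sum_Sn_m by exact H. reflexivity. Qed.

Definition G (e : R) (n : nat) : R := sum_n_m (fun t => e ^ t / INR t) 1 n.

Lemma G_0 e : G e 0 = 0.
Proof. unfold G. rewrite sum_n_m_zero; auto. Qed.

Lemma G_S e n : G e (S n) = G e n + e ^ (S n) / INR (S n).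
Proof. unfold G. rewrite sum_n_m_Sr by lia. reflexivity. Qed.

Lemma INR_S_pos n : 0 < INR (S n).
Proof. apply lt_0_INR; lia. Qed.

Lemma lim_inv_S : is_lim_seq (fun n => / INR (S n)) 0.
Proof.
  assert (H := is_lim_seq_inv INR p_infty is_lim_seq_INR).
  simpl in H. apply is_lim_seq_incr_1 in H. apply H. discriminate.
Qed.

Lemma lim_c_inv_S c : is_lim_seq (fun n => c / INR (S n)) 0.
Proof.
  replace 0 with (c * 0) by ring.
  apply is_lim_seq_mult'; [apply is_lim_seq_const | apply lim_inv_S].
Qed.

Lemma lim_squeeze0 (u : nat -> R) (c : R) :
  (forall n, Rabs (u n) <= c / INR (S n)) -> is_lim_seq u 0.
Proof.
  intro H. apply is_lim_seq_le_le with (u := fun n => - (c / INR (S n))) (w := fun n => c / INR (S n)).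
  - intro n. specialize (H n). apply Rabs_le_between in H. lra. 
  - replace (Finite 0) with (Rbar_opp 0) by (simpl; f_equal; ring).
    apply (is_lim_seq_opp (fun n => c / INR (S n))). apply lim_c_inv_S.
  - apply lim_c_inv_S.
Qed.

Lemma sum0 (u : nat -> R) n m : (m < n)%nat -> sum_n_m u n m = 0.
Proof. intro H. rewrite sum_n_m_zero by exact H. reflexivity. Qed.

Lemma sum_n_m_Rmult_r (c : R) (u : nat -> R) n m :
  sum_n_m (fun k => u k * c) n m = sum_n_m u n m * c.
Proof. apply (sum_n_m_mult_r c u). Qed.


Lemma ln_le_sub1 x : 0 < x -> ln x <= x - 1.
Proof.
  intro Hx. rewrite <- (ln_exp (x - 1)). apply ln_le; auto.
  pose proof (exp_ineq1_le (x - 1)). lra.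
Qed.

Lemma ln_step_up j : (1 <= j)%nat -> ln (INR (S j)) - ln (INR j) <= / INR j.
Proof.
  intro Hj. assert (Hp : 0 < INR j) by (apply lt_0_INR; lia).
  pose proof (INR_S_pos j) as HS.
  rewrite <- ln_div by lra.
  eapply Rle_trans. apply ln_le_sub1. apply Rdiv_lt_0_compat; lra.
  rewrite S_INR. right. field. lra.
Qed.

Lemma ln_step_low j : (1 <= j)%nat -> / INR (S j) <= ln (INR (S j)) - ln (INR j).
Proof.
  intro Hj. assert (Hp : 0 < INR j) by (apply lt_0_INR; lia).
  pose proof (INR_S_pos j) as HS.
  assert (H := ln_le_sub1 (INR j / INR (S j))).
  rewrite ln_div in H by lra.
  assert (E : INR j / INR (S j) - 1 = - / INR (S j)) by (rewrite S_INR; field; lra).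
  rewrite E in H. 
  assert (0 < INR j / INR (S j)) by (apply Rdiv_lt_0_compat; lra). lra.
Qed.

Lemma G1_ln_bounds n m : (1 <= n)%nat -> (n <= m)%nat ->
  ln (INR (S m)) - ln (INR (S n)) <= G 1 m - G 1 n <= ln (INR m) - ln (INR n).
Proof.
  intros Hn Hm. induction Hm.
  - lra.
  - rewrite G_S, pow1.
    assert (U := ln_step_up (S m) ltac:(lia)).
    assert (Lo := ln_step_low m ltac:(lia)).
    assert (U' := ln_step_up m ltac:(lia)).
    unfold Rdiv. rewrite Rmult_1_l. lra.
Qed.

Lemma Gm1_even n : G (-1) (2 * n) = G 1 n - G 1 (2 * n).
Proof.
  induction n.
  - simpl. rewrite G_0. ring.
  - replace (2 * S n)%nat with (S (S (2 * n))) by lia.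
    rewrite !G_S, IHn, pow1.
    replace (S (S (2 * n)))%nat with (2 * S n)%nat at 1 by lia.
    rewrite (pow_1_even (S n)).
    replace (S (2 * n)) with (S (2 * n))%nat by reflexivity.
    rewrite pow_1_odd.
    rewrite !S_INR, mult_INR. simpl.
    assert (0 <= INR n) by apply pos_INR.
    rewrite !pow1. field; lra.
Qed.

Lemma exp1_gt2 : 2 < exp 1.
Proof. pose proof (exp_ineq1 1 ltac:(lra)). lra. Qed.

Lemma ln2_lt1 : ln 2 < 1.
Proof.
  apply Rlt_le_trans with (ln (exp 1)).
  - apply ln_increasing; [lra | apply exp1_gt2].
  - rewrite ln_exp; lra.
Qed.

Lemma ln2_pos : 0 < ln 2.
Proof. pose proof ln_lt_2. lra. Qed.

Lemma Gm1_even_bound n : (1 <= n)%nat ->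
  Rabs (G (-1) (2 * n) + ln 2) <= / INR (S (2 * n)).
Proof.
  intro Hn. rewrite Gm1_even.
  destruct (G1_ln_bounds n (2 * n) Hn ltac:(lia)) as [Lo Up].
  assert (Hp : 0 < INR n) by (apply lt_0_INR; lia).
  assert (E1 : ln (INR (2 * n)) - ln (INR n) = ln 2).
  { rewrite mult_INR. replace (INR 2) with 2 by (simpl; ring). rewrite ln_mult by lra. ring. }
  assert (E2 : ln (INR (S (S (2 * n)))) - ln (INR (S n)) = ln 2).
  { replace (S (S (2 * n))) with (2 * S n)%nat by lia.
    rewrite mult_INR. replace (INR 2) with 2 by (simpl; ring).
    rewrite ln_mult by (try lra; apply INR_S_pos). ring. }
  assert (E3 := ln_step_up (S (2 * n)) ltac:(lia)).
  apply Rabs_le. split; lra.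
Qed.

Lemma INR_odd k : INR (S (2 * k)) = 2 * INR k + 1.
Proof. rewrite S_INR, mult_INR. simpl. ring. Qed.

Lemma Gm1_near N : Rabs (G (-1) N + ln 2) <= 4 / INR (S N).
Proof.
  destruct (Nat.Even_or_Odd N) as [[n Hn] | [n Hn]]; subst N.
  - destruct n.
    + simpl. rewrite G_0, Rplus_0_l, Rabs_pos_eq by (pose proof ln2_pos; lra).
      pose proof ln2_lt1. lra.
    + eapply Rle_trans. apply Gm1_even_bound; lia.
      assert (0 < INR (S (2 * S n))) by apply INR_S_pos.
      unfold Rdiv. rewrite <- (Rmult_1_l (/ INR (S (2 * S n)))) at 1.
      apply Rmult_le_compat_r; [left; apply Rinv_0_lt_compat; lra | lra].
  - replace (2 * n + 1)%nat with (S (2 * n)) by lia.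
    rewrite G_S, pow_1_odd.
    destruct n.
    + simpl. rewrite G_0. 
      replace (0 + -1 / (0 + 1) + ln 2) with (ln 2 - 1) by (field).
      rewrite Rabs_left1 by (pose proof ln2_lt1; lra). pose proof ln2_pos. lra.
    + assert (B := Gm1_even_bound (S n) ltac:(lia)).
      replace (G (-1) (2 * S n) + -1 / INR (S (2 * S n)) + ln 2)
        with ((G (-1) (2 * S n) + ln 2) + (- / INR (S (2 * S n)))) by (unfold Rdiv; ring).
      eapply Rle_trans. apply Rabs_triang. rewrite Rabs_Ropp.
      rewrite (Rabs_pos_eq (/ INR (S (2 * S n)))) by (left; apply Rinv_0_lt_compat, INR_S_pos).
      rewrite INR_odd in *. rewrite (S_INR (S (2 * S n))), INR_odd.
      rewrite S_INR in *.
      assert (0 <= INR n) by apply pos_INR.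
      assert (E : / (2 * (INR n + 1) + 1) + / (2 * (INR n + 1) + 1)
                  <= 4 / (2 * (INR n + 1) + 1 + 1)).
      { set (x := 2 * (INR n + 1) + 1). assert (Hx : 1 <= x) by (unfold x; lra).
        assert (E : 4 / (x + 1) - (/ x + / x) = (2 * x - 2) * / (x * (x + 1))) by (field; lra).
        assert (0 <= (2 * x - 2) * / (x * (x + 1))).
        { apply Rmult_le_pos; [lra | left; apply Rinv_0_lt_compat; nra]. }
        lra. }
      lra.
Qed.

Lemma alt_harm_lim : is_lim_seq (G (-1)) (- ln 2).
Proof.
  assert (H : is_lim_seq (fun N => (G (-1) N + ln 2) + - ln 2) (0 + - ln 2)).
  2:{ rewrite Rplus_0_l in H. eapply is_lim_seq_ext; [| exact H]. intro; simpl; ring. }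
  apply is_lim_seq_plus'; [| apply is_lim_seq_const].
  apply lim_squeeze0 with (c := 4). apply Gm1_near.
Qed.

Lemma Gm1_bound N : Rabs (G (-1) N) <= 5.
Proof.
  assert (H := Gm1_near N). assert (HS := INR_S_pos N).
  assert (E : 4 / INR (S N) <= 4).
  { unfold Rdiv. rewrite <- (Rmult_1_r 4) at 2. apply Rmult_le_compat_l; [lra|].
    rewrite <- Rinv_1. apply Rinv_le_contravar; [lra|]. rewrite S_INR. pose proof (pos_INR N). lra. }
  replace (G (-1) N) with ((G (-1) N + ln 2) - ln 2) by ring.
  eapply Rle_trans. apply Rabs_triang. rewrite Rabs_Ropp, (Rabs_pos_eq (ln 2)) by (pose proof ln2_pos; lra).
  pose proof ln2_lt1. lra.
Qed.


Lemma eps_sq e m : e * e = 1 -> e ^ m * e ^ m = 1.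
Proof. intro H. rewrite <- Rpow_mult_distr, H. apply pow1. Qed.

Lemma eps_shift e m j : e * e = 1 -> e ^ m * e ^ (m + j) = e ^ j.
Proof. intro H. rewrite pow_add, <- Rmult_assoc, eps_sq by exact H. Rring. Qed.

Lemma sum_excl (f : nat -> R) (m K : nat) : (1 <= m <= K)%nat ->
  sum_n_m (fun k => if Nat.eqb k m then 0 else f k) 1 K = sum_n_m f 1 K - f m.
Proof.
  intros [H1 H2]. induction H2.
  - destruct m; [lia|]. rewrite !sum_n_m_Sr by lia. rewrite Nat.eqb_refl.
    rewrite (sum_ext_loc _ f) by (intros k Hk; destruct (Nat.eqb_spec k (S m)); [lia | reflexivity]).
    Rring.
  - rewrite !sum_n_m_Sr by lia. rewrite IHle.
    destruct (Nat.eqb_spec (S m0) m); [lia|]. Rring.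
Qed.

Lemma eps_sub e n t : e * e = 1 -> (t <= n)%nat -> e ^ (n - t) = e ^ n * e ^ t.
Proof.
  intros He Ht. replace n with ((n - t) + t)%nat at 2 by lia.
  rewrite pow_add, Rmult_assoc, eps_sq by exact He. Rring.
Qed.

Lemma sum_plus_form e m K : e * e = 1 ->
  sum_n_m (fun k => e ^ k / (INR m + INR k)) 1 K = e ^ m * (G e (m + K) - G e m).
Proof.
  intro He. induction K.
  - rewrite sum0 by lia. rewrite Nat.add_0_r. Rring.
  - rewrite sum_n_m_Sr by lia. rewrite IHK.
    replace (m + S K)%nat with (S (m + K)) by lia. rewrite G_S.
    replace (S (m + K)) with (m + S K)%nat by lia.
    assert (E := eps_shift e m (S K) He).
    rewrite plus_INR. unfold Rdiv.
    transitivity (e ^ m * (G e (m + K) - G e m) + (e ^ m * e ^ (m + S K)) * / (INR m + INR (S K))).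
    + rewrite E. Rring.
    + Rring.
Qed.

Lemma sum_minus_form e m K : e * e = 1 -> (1 <= m <= K)%nat ->
  sum_n_m (fun k => if Nat.eqb k m then 0 else e ^ k / (INR m - INR k)) 1 K
  = e ^ m * (G e (m - 1) - G e (K - m)).
Proof.
  intros He [H1 H2]. induction H2.
  - destruct m; [lia|]. rewrite sum_n_m_Sr by lia. rewrite Nat.eqb_refl.
    rewrite (sum_ext_loc _ (fun k => e ^ k / (INR (S m) - INR k))) 
      by (intros k Hk; destruct (Nat.eqb_spec k (S m)); [lia | reflexivity]).
    rewrite sum_n_m_rev. replace (S m - 1)%nat with m by lia. rewrite Nat.sub_diag, G_0.
    unfold G. rewrite Rplus_0_r, Rminus_0_r, <- sum_n_m_Rmult_l.
    apply sum_ext_loc. intros t Ht.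
    replace (INR (S m) - INR (S m - t)) with (INR t) by (rewrite minus_INR by lia; ring).
    rewrite eps_sub by (auto; lia). unfold Rdiv. Rring.
  - rewrite sum_n_m_Sr by lia. rewrite IHle.
    destruct (Nat.eqb_spec (S m0) m); [lia|].
    replace (S m0 - m)%nat with (S (m0 - m)) by lia. rewrite G_S.
    replace (S (m0 - m)) with (S m0 - m)%nat by lia.
    rewrite eps_sub by (auto; lia).
    rewrite (minus_INR (S m0) m) by lia.
    assert (0 < INR (S m0) - INR m) by (apply Rlt_0_minus, lt_INR; lia).
    assert (E2 : e ^ m * e ^ m = 1) by (apply eps_sq; exact He).
    replace (e ^ S m0) with (e ^ S m0 * (e ^ m * e ^ m)) at 1 by (rewrite E2; ring).
    Rfield. lra.
Qed.


Lemma G1_diff_bound N p : 0 <= G 1 (N + p) - G 1 N <= INR p / INR (S N).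
Proof.
  induction p.
  - rewrite Nat.add_0_r. simpl. unfold Rdiv. rewrite Rmult_0_l. lra.
  - replace (N + S p)%nat with (S (N + p)) by lia. rewrite G_S, pow1.
    assert (HN := INR_S_pos N).
    assert (HNp := INR_S_pos (N + p)).
    assert (Hle : / INR (S (N + p)) <= / INR (S N)).
    { apply Rinv_le_contravar; auto. apply le_INR; lia. }
    assert (0 < / INR (S (N + p))) by (apply Rinv_0_lt_compat; auto).
    rewrite (S_INR p). unfold Rdiv in *. rewrite Rmult_1_l. rewrite Rmult_plus_distr_r. split; lra.
Qed.

Lemma G1_diff_lim p : is_lim_seq (fun N => G 1 (N + p) - G 1 N) 0.
Proof.
  apply lim_squeeze0 with (c := INR p). intro N.
  destruct (G1_diff_bound N p). rewrite Rabs_pos_eq; lra.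
Qed.

Definition qrow (k m : nat) : R :=
  if Nat.eqb m 0 then 0 else if Nat.eqb m k then 0 else / (INR m ^ 2 - INR k ^ 2).

Lemma qrow_split k m : (1 <= k)%nat -> (1 <= m)%nat ->
  qrow k m = / (2 * INR k) * ((if Nat.eqb m k then 0 else - (1 ^ m / (INR k - INR m)))
                              - (if Nat.eqb m k then 0 else 1 ^ m / (INR k + INR m))).
Proof.
  intros Hk Hm. unfold qrow.
  destruct (Nat.eqb_spec m 0); [lia|].
  destruct (Nat.eqb_spec m k). { ring. }
  rewrite pow1.
  assert (0 < INR k) by (apply lt_0_INR; lia).
  assert (0 < INR m) by (apply lt_0_INR; lia).
  assert (INR m <> INR k) by (intro E; apply INR_eq in E; lia).
  assert (INR k - INR m <> 0) by lra.
  assert (INR m ^ 2 - INR k ^ 2 <> 0).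
  { replace (INR m ^ 2 - INR k ^ 2) with ((INR m - INR k) * (INR m + INR k)) by ring.
    apply Rmult_integral_contrapositive; split; lra. }
  field. repeat split; lra.
Qed.

Lemma row_partial k M : (1 <= k <= M)%nat ->
  sum_n (qrow k) M = / (2 * INR k) * ((G 1 (M - k) - G 1 (k - 1)) - ((G 1 (k + M) - G 1 k) - / (2 * INR k))).
Proof.
  intros Hk. rewrite sum_n_pad by reflexivity.
  rewrite (sum_ext_loc _ (fun m => / (2 * INR k) * ((if Nat.eqb m k then 0 else - (1 ^ m / (INR k - INR m)))
                              - (if Nat.eqb m k then 0 else 1 ^ m / (INR k + INR m)))))
    by (intros m Hm; apply qrow_split; lia).
  rewrite sum_n_m_Rmult_l, sum_n_m_Rminus. f_equal.
  rewrite (sum_ext _ (fun m => - (if Nat.eqb m k then 0 else 1 ^ m / (INR k - INR m))))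
    by (intro m; destruct (Nat.eqb m k); ring).
  rewrite sum_n_m_Ropp, sum_minus_form by (lia || ring).
  rewrite sum_excl by lia. rewrite sum_plus_form by ring.
  rewrite !pow1. replace (INR k + INR k) with (2 * INR k) by ring. unfold Rdiv. ring.
Qed.

Lemma row_series k : (1 <= k)%nat -> is_series (qrow k) (3 / (4 * INR k ^ 2)).
Proof.
  intro Hk. apply series_lim. apply (is_lim_seq_incr_n _ k).
  assert (Hk0 : 0 < INR k) by (apply lt_0_INR; lia).
  apply is_lim_seq_ext with
    (u := fun N => / (2 * INR k) * (/ INR k + / (2 * INR k)) - / (2 * INR k) * (G 1 (N + 2 * k) - G 1 N)).
  { intro N. rewrite row_partial by lia.
    replace (N + k - k)%nat with N by lia.
    replace (k + (N + k))%nat with (N + 2 * k)%nat by lia.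
    destruct k; [lia|]. replace (S k - 1)%nat with k by lia. rewrite (G_S 1 k), pow1.
    field. lra. }
  replace (3 / (4 * INR k ^ 2)) with (/ (2 * INR k) * (/ INR k + / (2 * INR k)) - / (2 * INR k) * 0)
    by (field; lra).
  apply is_lim_seq_minus'; [apply is_lim_seq_const|].
  replace (Finite (/ (2 * INR k) * 0)) with (Rbar_mult (/ (2 * INR k)) 0) by (simpl; reflexivity).
  apply is_lim_seq_scal_l. apply G1_diff_lim.
Qed.


Lemma sumn_S (f : nat -> R) N : sum_n f (S N) = sum_n f N + f (S N).
Proof. rewrite sum_Sn. reflexivity. Qed.

Lemma sumn_0 (f : nat -> R) : sum_n f 0 = f 0%nat.
Proof. rewrite sum_O. reflexivity. Qed.

Lemma sumn_le (f g : nat -> R) N : (forall n, f n <= g n) -> sum_n f N <= sum_n g N.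
Proof. intro H. induction N. - rewrite !sumn_0. auto. - rewrite !sumn_S. specialize (H (S N)). lra. Qed.

Lemma sumn_nonneg (f : nat -> R) N : (forall n, 0 <= f n) -> 0 <= sum_n f N.
Proof. intro H. induction N. - rewrite sumn_0. auto. - rewrite sumn_S. specialize (H (S N)). lra. Qed.

Lemma sumn_mono (f : nat -> R) N N' : (forall n, 0 <= f n) -> (N <= N')%nat -> sum_n f N <= sum_n f N'.
Proof. intros H HN. induction HN. - lra. - rewrite sumn_S. specialize (H (S m)). lra. Qed.

Lemma term_le_sumn (f : nat -> R) k K : (forall n, 0 <= f n) -> (k <= K)%nat -> f k <= sum_n f K.
Proof.
  intros H Hk. apply Rle_trans with (sum_n f k); [| apply sumn_mono; auto].
  destruct k. - rewrite sumn_0; lra. - rewrite sumn_S. pose proof (sumn_nonneg f k H). lra.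
Qed.

Lemma partial_le_series (f : nat -> R) l N : (forall n, 0 <= f n) -> is_series f l -> sum_n f N <= l.
Proof.
  intros H Hs. assert (Hs2 : is_lim_seq (sum_n f) l) by exact Hs.
  assert (Hs' := proj1 (is_lim_seq_incr_n _ N _) Hs2).
  assert (Hc := is_lim_seq_const (sum_n f N)).
  assert (R := is_lim_seq_le _ _ _ _ (fun n => sumn_mono f N (n + N) H ltac:(lia)) Hc Hs').
  exact R.
Qed.

Lemma series_bounded (f : nat -> R) B : (forall n, 0 <= f n) -> (forall N, sum_n f N <= B) ->
  exists l, is_series f l /\ l <= B.
Proof.
  intros H HB.
  assert (E : ex_finite_lim_seq (sum_n f)).
  { apply ex_finite_lim_seq_incr with B; auto. intro n. rewrite sumn_S. specialize (H (S n)). lra. }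
  destruct E as [l Hl]. exists l. split; [apply series_lim; exact Hl|].
  assert (Hc := is_lim_seq_const B).
  exact (is_lim_seq_le _ _ _ _ HB Hl Hc).
Qed.

Lemma lim_sumn (u : nat -> nat -> R) (v : nat -> R) K :
  (forall k, is_lim_seq (fun M => u k M) (v k)) ->
  is_lim_seq (fun M => sum_n (fun k => u k M) K) (sum_n v K).
Proof.
  intro H. induction K.
  - rewrite sumn_0. eapply is_lim_seq_ext; [| apply (H 0%nat)]. intro; rewrite sumn_0; reflexivity.
  - rewrite sumn_S. eapply is_lim_seq_ext; [| apply (is_lim_seq_plus' _ _ _ _ IHK (H (S K)))].
    intro; rewrite sumn_S; reflexivity.
Qed.

Definition rect (b : nat -> nat -> R) K M := sum_n (fun k => sum_n (fun m => b k m) M) K.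

Lemma rect_switch b K M : rect b K M = rect (fun m k => b k m) M K.
Proof. unfold rect. apply sum_n_switch. Qed.

Lemma tonelli_le (b : nat -> nat -> R) (Rw Cl : nat -> R) l1 l2 :
  (forall k m, 0 <= b k m) ->
  (forall k, is_series (b k) (Rw k)) -> (forall m, is_series (fun k => b k m) (Cl m)) ->
  is_series Rw l1 -> is_series Cl l2 -> l1 <= l2.
Proof.
  intros Hb HR HC H1 H2.
  assert (HRn : forall k, 0 <= Rw k).
  { intro k. apply Rle_trans with (sum_n (b k) 0); [apply sumn_nonneg; auto | apply partial_le_series; auto]. }
  assert (HCn : forall m, 0 <= Cl m).
  { intro m. apply Rle_trans with (sum_n (fun k => b k m) 0); [apply sumn_nonneg; auto | apply partial_le_series; auto]. }
  assert (Hk : forall K, sum_n Rw K <= l2).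
  { intro K.
    assert (Lm : is_lim_seq (fun M => rect b K M) (sum_n Rw K)).
    { unfold rect. apply lim_sumn. intro k. apply series_lim, HR. }
    assert (Bd : forall M, rect b K M <= l2).
    { intro M. rewrite rect_switch. unfold rect.
      apply Rle_trans with (sum_n Cl M).
      - apply sumn_le. intro m. apply partial_le_series; auto.
      - apply partial_le_series; auto. }
    exact (is_lim_seq_le _ _ _ _ Bd Lm (is_lim_seq_const l2)). }
  assert (H1' : is_lim_seq (sum_n Rw) l1) by exact H1.
  exact (is_lim_seq_le _ _ _ _ Hk H1' (is_lim_seq_const l2)).
Qed.

Lemma tonelli (b : nat -> nat -> R) B :
  (forall k m, 0 <= b k m) -> (forall K M, rect b K M <= B) ->
  exists Rw Cl l, (forall k, is_series (b k) (Rw k)) /\ (forall m, is_series (fun k => b k m) (Cl m))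
    /\ is_series Rw l /\ is_series Cl l.
Proof.
  intros Hb HB.
  assert (Rows : forall k, exists r, is_series (b k) r /\ r <= B).
  { intro k. apply series_bounded; auto. intro M. eapply Rle_trans; [| apply (HB k M)].
    unfold rect. apply (term_le_sumn (fun k0 => sum_n (fun m => b k0 m) M)); auto.
    intro; apply sumn_nonneg; auto. }
  assert (Cols : forall m, exists r, is_series (fun k => b k m) r /\ r <= B).
  { intro m. apply series_bounded; auto. intro K. eapply Rle_trans; [| apply (HB K m)].
    rewrite rect_switch. unfold rect. apply (term_le_sumn (fun m0 => sum_n (fun k => b k m0) K)); auto.
    intro; apply sumn_nonneg; auto. }
  set (Rw := fun k => Series (b k)). set (Cl := fun m => Series (fun k => b k m)).
  assert (HR : forall k, is_series (b k) (Rw k)).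
  { intro k. destruct (Rows k) as [r [Hr _]]. unfold Rw. rewrite (is_series_unique _ _ Hr). exact Hr. }
  assert (HC : forall m, is_series (fun k => b k m) (Cl m)).
  { intro m. destruct (Cols m) as [r [Hr _]]. unfold Cl. rewrite (is_series_unique _ _ Hr). exact Hr. }
  assert (HRn : forall k, 0 <= Rw k).
  { intro k. apply Rle_trans with (sum_n (b k) 0); [apply sumn_nonneg; auto | apply partial_le_series; auto]. }
  assert (HCn : forall m, 0 <= Cl m).
  { intro m. apply Rle_trans with (sum_n (fun k => b k m) 0); [apply sumn_nonneg; auto | apply partial_le_series; auto]. }
  assert (SR : exists l, is_series Rw l /\ l <= B).
  { apply series_bounded; auto. intro K.
    assert (Lm : is_lim_seq (fun M => rect b K M) (sum_n Rw K)).
    { unfold rect. apply lim_sumn. intro k. apply series_lim, HR. }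
    exact (is_lim_seq_le _ _ _ _ (HB K) Lm (is_lim_seq_const B)). }
  assert (SC : exists l, is_series Cl l /\ l <= B).
  { apply series_bounded; auto. intro M.
    assert (Lm : is_lim_seq (fun K => rect b K M) (sum_n Cl M)).
    { eapply is_lim_seq_ext. intro K. symmetry. apply rect_switch.
      unfold rect. apply lim_sumn. intro m. apply series_lim, HC. }
    exact (is_lim_seq_le _ _ _ _ (fun K => HB K M) Lm (is_lim_seq_const B)). }
  destruct SR as [l1 [H1 _]]. destruct SC as [l2 [H2 _]].
  assert (E1 := tonelli_le b Rw Cl l1 l2 Hb HR HC H1 H2).
  assert (E2 := tonelli_le (fun m k => b k m) Cl Rw l2 l1 (fun m k => Hb k m) HC HR H2 H1).
  assert (El : l1 = l2) by (apply Rle_antisym; auto). subst l2.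
  exists Rw, Cl, l1. repeat split; auto.
Qed.

Lemma fubini (a : nat -> nat -> R) B (r c : nat -> R) l :
  (forall K M, rect (fun k m => Rabs (a k m)) K M <= B) ->
  (forall k, is_series (a k) (r k)) -> (forall m, is_series (fun k => a k m) (c m)) ->
  is_series r l -> is_series c l.
Proof.
  intros HB Hr Hc Hl.
  set (ap := fun k m => (Rabs (a k m) + a k m) / 2).
  set (an := fun k m => (Rabs (a k m) - a k m) / 2).
  assert (Hp : forall k m, 0 <= ap k m) by (intros; unfold ap; pose proof (Rle_abs (a k m)); pose proof (Rle_abs (- a k m)); rewrite Rabs_Ropp in *; lra).
  assert (Hn : forall k m, 0 <= an k m) by (intros; unfold an; pose proof (Rle_abs (a k m)); pose proof (Rle_abs (- a k m)); rewrite Rabs_Ropp in *; lra).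
  assert (Bp : forall K M, rect ap K M <= B).
  { intros. eapply Rle_trans; [| apply HB]. unfold rect. apply sumn_le; intro; apply sumn_le; intro.
    unfold ap. pose proof (Rle_abs (a n n0)). pose proof (Rle_abs (- a n n0)). rewrite Rabs_Ropp in *. lra. }
  assert (Bn : forall K M, rect an K M <= B).
  { intros. eapply Rle_trans; [| apply HB]. unfold rect. apply sumn_le; intro; apply sumn_le; intro.
    unfold an. pose proof (Rle_abs (a n n0)). pose proof (Rle_abs (- a n n0)). rewrite Rabs_Ropp in *. lra. }
  destruct (tonelli ap B Hp Bp) as [Rp [Cp [lp [HRp [HCp [Lp1 Lp2]]]]]].
  destruct (tonelli an B Hn Bn) as [Rn [Cn [ln' [HRn [HCn [Ln1 Ln2]]]]]].
  assert (Er : forall k, r k = Rp k - Rn k).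
  { intro k. assert (S := is_series_minus _ _ _ _ (HRp k) (HRn k)).
    apply is_series_unique in S. rewrite <- (is_series_unique _ _ (Hr k)).
    change (Rp k - Rn k) with (plus (Rp k) (opp (Rn k))). rewrite <- S. apply Series_ext. intro m. unfold ap, an.
    unfold plus, opp; simpl. field. }
  assert (Ec : forall m, c m = Cp m - Cn m).
  { intro m. assert (S := is_series_minus _ _ _ _ (HCp m) (HCn m)).
    apply is_series_unique in S. rewrite <- (is_series_unique _ _ (Hc m)).
    change (Cp m - Cn m) with (plus (Cp m) (opp (Cn m))). rewrite <- S. apply Series_ext. intro k. unfold ap, an.
    unfold plus, opp; simpl. field. }
  assert (S1 := is_series_minus _ _ _ _ Lp1 Ln1).
  assert (S2 := is_series_minus _ _ _ _ Lp2 Ln2).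
  assert (El : l = lp - ln').
  { apply is_series_unique in Hl. apply is_series_unique in S1. rewrite <- Hl.
    change (lp - ln') with (plus lp (opp ln')). rewrite <- S1.
    apply Series_ext. intro k. rewrite Er. reflexivity. }
  rewrite El. eapply is_series_ext; [| exact S2]. intro m. rewrite Ec. reflexivity.
Qed.


Lemma ser_ext (f g : nat -> R) l : (forall n, f n = g n) -> is_series f l -> is_series g l.
Proof. apply is_series_ext. Qed.

Lemma ser_scal (f : nat -> R) c l : is_series f l -> is_series (fun n => c * f n) (c * l).
Proof. intro H. apply (is_series_scal c f l H). Qed.

Lemma ser_plus (f g : nat -> R) l1 l2 : is_series f l1 -> is_series g l2 ->
  is_series (fun n => f n + g n) (l1 + l2).
Proof. intros H1 H2. apply (is_series_plus f g l1 l2 H1 H2). Qed.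

Lemma ser_minus (f g : nat -> R) l1 l2 : is_series f l1 -> is_series g l2 ->
  is_series (fun n => f n - g n) (l1 - l2).
Proof. intros H1 H2. apply (is_series_minus f g l1 l2 H1 H2). Qed.

Lemma ser_opp (f : nat -> R) l : is_series f l -> is_series (fun n => - f n) (- l).
Proof. intro H. apply (ser_ext (fun n => -1 * f n)); [intro; ring|].
  replace (- l) with (-1 * l) by ring. apply ser_scal; auto. Qed.

Lemma ser_zero : is_series (fun _ : nat => 0) 0.
Proof. apply series_lim. eapply is_lim_seq_ext; [| apply is_lim_seq_const].
  intro n. simpl. induction n. - rewrite sumn_0; reflexivity. - rewrite sumn_S, <- IHn. ring. Qed.

Lemma ser_fin (f : nat -> nat -> R) (l : nat -> R) p q :
  (forall i, is_series (f i) (l i)) ->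
  is_series (fun n => sum_n_m (fun i => f i n) p q) (sum_n_m l p q).
Proof.
  intro H. destruct (Compare_dec.le_lt_dec p q) as [Hpq | Hpq].
  - induction Hpq.
    + apply (ser_ext (f p)); [intro; rewrite sum_n_n; reflexivity|]. rewrite sum_n_n. apply H.
    + rewrite sum_n_m_Sr by lia. apply (ser_ext (fun n => sum_n_m (fun i => f i n) p m + f (S m) n)).
      { intro; rewrite sum_n_m_Sr by lia; reflexivity. }
      apply ser_plus; auto.
  - rewrite sum0 by lia. apply (ser_ext (fun _ => 0)); [intro; rewrite sum0 by lia; reflexivity|]. apply ser_zero.
Qed.



Lemma ser_pad (g : nat -> R) l : is_series (fun m => g (S m)) l ->
  is_series (fun m => match m with O => 0 | S _ => g m end) l.
Proof.
  intro H. apply is_series_decr_1.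
  change (plus l (opp 0)) with (l + - 0). rewrite Ropp_0, Rplus_0_r.
  exact H.
Qed.

Lemma tele_sum N : sum_n (fun n => / (INR (S n) * INR (S (S n)))) N = 1 - / INR (S (S N)).
Proof.
  induction N.
  - rewrite sumn_0. simpl. Rfield.
  - rewrite sumn_S, IHN. rewrite !(S_INR (S _)). 
    assert (0 <= INR N) by apply pos_INR. rewrite S_INR. Rfield. lra.
Qed.

Lemma tele_series : is_series (fun n => / (INR (S n) * INR (S (S n)))) 1.
Proof.
  apply series_lim. eapply is_lim_seq_ext. intro N. symmetry. apply tele_sum.
  replace (Finite 1) with (Finite (1 - 0)) by (f_equal; ring).
  apply is_lim_seq_minus'; [apply is_lim_seq_const|].
  apply (is_lim_seq_incr_1 (fun n => / INR (S n))). apply lim_inv_S.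
Qed.

Lemma inv_pow_bound n s : (2 <= s)%nat -> 0 < / INR (S n) ^ s <= 2 * / (INR (S n) * INR (S (S n))).
Proof.
  intro Hs. assert (H0 := INR_S_pos n).
  assert (H1 : INR (S (S n)) <= 2 * INR (S n)) by (rewrite !S_INR; pose proof (pos_INR n); lra).
  assert (Hp : INR (S n) ^ 2 <= INR (S n) ^ s).
  { apply Rle_pow; auto. rewrite S_INR; pose proof (pos_INR n); lra. }
  split. - apply Rinv_0_lt_compat, pow_lt; auto.
  - assert (0 < INR (S n) ^ 2) by (apply pow_lt; auto).
    apply Rle_trans with (/ INR (S n) ^ 2).
    + apply Rinv_le_contravar; auto.
    + assert (0 < INR (S (S n))) by apply INR_S_pos.
      replace (2 * / (INR (S n) * INR (S (S n)))) with (/ (INR (S n) * (INR (S (S n)) / 2))) by (field; lra).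
      apply Rinv_le_contravar. { apply Rmult_lt_0_compat; lra. }
      replace (INR (S n) ^ 2) with (INR (S n) * INR (S n)) by ring. apply Rmult_le_compat_l; lra.
Qed.

Lemma zeta_ex s : (2 <= s)%nat -> ex_series (fun m => / INR (S m) ^ s).
Proof.
  intro Hs. apply (@ex_series_le R_AbsRing R_CompleteNormedModule _ (fun n => 2 * / (INR (S n) * INR (S (S n))))).
  - intro n. destruct (inv_pow_bound n s Hs). change (norm (/ INR (S n) ^ s)) with (Rabs (/ INR (S n) ^ s)).
    rewrite Rabs_pos_eq; lra.
  - exists (2 * 1). apply ser_scal, tele_series.
Qed.

Lemma zeta_is s : (2 <= s)%nat -> is_series (fun m => / INR (S m) ^ s) (zeta s).
Proof. intro Hs. unfold zeta. apply Series_correct, zeta_ex, Hs. Qed.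

Lemma altzeta_is s : (2 <= s)%nat -> is_series (fun m => (-1) ^ m / INR (S m) ^ s) (altzeta s).
Proof.
  intro Hs. unfold altzeta. apply Series_correct.
  apply (@ex_series_le R_AbsRing R_CompleteNormedModule _ (fun m => / INR (S m) ^ s)).
  - intro n. change (norm ((-1) ^ n / INR (S n) ^ s)) with (Rabs ((-1) ^ n / INR (S n) ^ s)).
    unfold Rdiv. rewrite Rabs_mult, pow_1_abs, Rmult_1_l.
    destruct (inv_pow_bound n s Hs). rewrite Rabs_pos_eq; lra.
  - apply zeta_ex, Hs.
Qed.

Definition zp (s m : nat) : R := match m with O => 0 | S _ => / INR m ^ s end.
Definition ep (s m : nat) : R := match m with O => 0 | S _ => (-1) ^ m / INR m ^ s end.

Lemma zp_is s : (2 <= s)%nat -> is_series (zp s) (zeta s).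
Proof. intro Hs. apply (ser_pad (fun m => / INR m ^ s)). apply zeta_is, Hs. Qed.

Lemma ep_is s : (2 <= s)%nat -> is_series (ep s) (- altzeta s).
Proof.
  intro Hs. apply (ser_pad (fun m => (-1) ^ m / INR m ^ s)).
  apply (ser_ext (fun m => - ((-1) ^ m / INR (S m) ^ s))); [intro m; cbv beta; change ((-1) ^ S m) with (-1 * (-1) ^ m); unfold Rdiv; ring|].
  apply ser_opp, altzeta_is, Hs.
Qed.


Lemma ser_delta (m : nat) (v : R) : is_series (fun k => if Nat.eqb k m then v else 0) v.
Proof.
  apply series_lim. apply (is_lim_seq_incr_n _ m).
  eapply is_lim_seq_ext; [| apply is_lim_seq_const]. intro N. simpl.
  assert (H : forall M, sum_n (fun k => if Nat.eqb k m then v else 0) M = if Nat.ltb M m then 0 else v).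
  { induction M.
    - rewrite sumn_0. destruct m; simpl; reflexivity.
    - rewrite sumn_S, IHM.
      destruct (Nat.eqb_spec (S M) m); destruct (Nat.ltb_spec M m); destruct (Nat.ltb_spec (S M) m);
        try lia; Rring. }
  rewrite H. destruct (Nat.ltb_spec (N + m) m); [lia | reflexivity].
Qed.

Lemma ser_excl (f : nat -> R) l m : is_series f l ->
  is_series (fun k => if Nat.eqb k m then 0 else f k) (l - f m).
Proof.
  intro H. apply (ser_ext (fun k => f k - (if Nat.eqb k m then f m else 0))).
  { intro k. destruct (Nat.eqb_spec k m); [subst; ring | ring]. }
  apply ser_minus; auto. apply ser_delta.
Qed.

Definition hp (k : nat) : R := match k with O => 0 | S _ => (-1) ^ k / INR k end.

Lemma hp_is : is_series hp (- ln 2).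
Proof.
  apply series_lim. eapply is_lim_seq_ext; [| apply alt_harm_lim].
  intro N. rewrite sum_n_pad by reflexivity. unfold G. apply sum_ext_loc.
  intros k Hk. destruct k; [lia|]. reflexivity.
Qed.

Section Col.
Variable m : nat.
Hypothesis Hm : (1 <= m)%nat.

Definition B1 (k : nat) : R := match k with O => 0 | S _ => if Nat.eqb k m then 0 else (-1) ^ k / INR k end.
Definition B2 (k : nat) : R := match k with O => 0 | S _ => if Nat.eqb k m then 0 else (-1) ^ k / (INR m - INR k) end.
Definition B3 (k : nat) : R := match k with O => 0 | S _ => if Nat.eqb k m then 0 else (-1) ^ k / (INR m + INR k) end.
Definition Ai (s k : nat) : R := match k with O => 0 | S _ => if Nat.eqb k m then 0 else (-1) ^ k / INR k ^ s end.

Lemma B1_is : is_series B1 (- ln 2 - (-1) ^ m / INR m).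
Proof.
  apply (ser_ext (fun k => if Nat.eqb k m then 0 else hp k)).
  { intro k. destruct k; simpl; [destruct m; reflexivity | reflexivity]. }
  replace ((-1) ^ m / INR m) with (hp m) by (destruct m; [lia | reflexivity]).
  apply ser_excl, hp_is.
Qed.

Lemma Ai_is s : (2 <= s)%nat -> is_series (Ai s) (- altzeta s - (-1) ^ m / INR m ^ s).
Proof.
  intro Hs. apply (ser_ext (fun k => if Nat.eqb k m then 0 else ep s k)).
  { intro k. destruct k; simpl; [destruct m; reflexivity | reflexivity]. }
  replace ((-1) ^ m / INR m ^ s) with (ep s m) by (destruct m; [lia | reflexivity]).
  apply ser_excl, ep_is, Hs.
Qed.

Lemma B2_is : is_series B2 ((-1) ^ m * (G (-1) (m - 1) + ln 2)).
Proof.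
  apply series_lim. apply (is_lim_seq_incr_n _ m).
  eapply is_lim_seq_ext.
  { intro N. symmetry. rewrite sum_n_pad by reflexivity.
    rewrite (sum_ext_loc _ (fun k => if Nat.eqb k m then 0 else (-1) ^ k / (INR m - INR k)))
      by (intros k Hk; destruct k; [lia | reflexivity]).
    rewrite sum_minus_form by (ring || lia).
    replace (N + m - m)%nat with N by lia. reflexivity. }
  replace (Finite ((-1) ^ m * (G (-1) (m - 1) + ln 2)))
    with (Rbar_mult ((-1) ^ m) (G (-1) (m - 1) - - ln 2)) by (simpl; f_equal; ring).
  apply is_lim_seq_scal_l. apply is_lim_seq_minus'; [apply is_lim_seq_const | apply alt_harm_lim].
Qed.

Lemma B3_is : is_series B3 ((-1) ^ m * (- ln 2 - G (-1) m) - (-1) ^ m / (2 * INR m)).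
Proof.
  apply series_lim. apply (is_lim_seq_incr_n _ m).
  eapply is_lim_seq_ext.
  { intro N. symmetry. rewrite sum_n_pad by reflexivity.
    rewrite (sum_ext_loc _ (fun k => if Nat.eqb k m then 0 else (-1) ^ k / (INR m + INR k)))
      by (intros k Hk; destruct k; [lia | reflexivity]).
    rewrite sum_excl by lia. rewrite sum_plus_form by ring.
    replace (INR m + INR m) with (2 * INR m) by ring. reflexivity. }
  apply is_lim_seq_minus'; [| apply is_lim_seq_const].
  replace (Finite ((-1) ^ m * (- ln 2 - G (-1) m)))
    with (Rbar_mult ((-1) ^ m) (- ln 2 - G (-1) m)) by (simpl; f_equal).
  apply is_lim_seq_scal_l. apply is_lim_seq_minus'; [| apply is_lim_seq_const].
  assert (H := alt_harm_lim). apply (is_lim_seq_incr_n _ (m + m)) in H.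
  eapply is_lim_seq_ext; [| exact H]. intro N. cbv beta. f_equal. lia.
Qed.

End Col.


Definition Phi (x y : R) : R := / x + / 2 * / (y - x) - / 2 * / (y + x).

Lemma PF (x y : R) (n : nat) : 0 < x -> 0 < y -> x <> y ->
  / (x ^ (2 * n + 1) * (y ^ 2 - x ^ 2)) =
  sum_n_m (fun i => / y ^ (2 * i) * / x ^ (2 * n + 3 - 2 * i)) 1 n + / y ^ (2 * n + 2) * Phi x y.
Proof.
  intros Hx Hy Hxy.
  assert (Hd : y ^ 2 - x ^ 2 <> 0).
  { replace (y ^ 2 - x ^ 2) with ((y - x) * (y + x)) by ring.
    apply Rmult_integral_contrapositive; split; lra. }
  assert (Hyx : y - x <> 0) by lra.
  assert (Hyx' : y + x <> 0) by lra.
  induction n.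
  - rewrite sum0 by lia. unfold Phi. simpl. field. repeat split; lra.
  - rewrite sum_n_m_Sr by lia.
    assert (E1 : / (x ^ (2 * S n + 1) * (y ^ 2 - x ^ 2)) = / x ^ 2 * / (x ^ (2 * n + 1) * (y ^ 2 - x ^ 2))).
    { replace (2 * S n + 1)%nat with (2 + (2 * n + 1))%nat by lia. rewrite pow_add.
      field. repeat split; try apply pow_nonzero; lra. }
    rewrite E1, IHn, Rmult_plus_distr_l, <- sum_n_m_Rmult_l.
    assert (E2 : sum_n_m (fun i => / x ^ 2 * (/ y ^ (2 * i) * / x ^ (2 * n + 3 - 2 * i))) 1 n
               = sum_n_m (fun i => / y ^ (2 * i) * / x ^ (2 * S n + 3 - 2 * i)) 1 n).
    { apply sum_ext_loc. intros i Hi.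
      replace (2 * S n + 3 - 2 * i)%nat with (2 + (2 * n + 3 - 2 * i))%nat by lia.
      rewrite pow_add. field. repeat split; try apply pow_nonzero; lra. }
    rewrite E2.
    replace (2 * S n + 3 - 2 * S n)%nat with 3%nat by lia.
    replace (2 * S n + 2)%nat with (2 + (2 * n + 2))%nat by lia.
    replace (2 * S n)%nat with (2 * n + 2)%nat by lia.
    rewrite (pow_add y 2 (2 * n + 2)). unfold Phi.
    assert (y ^ (2 * n + 2) <> 0) by (apply pow_nonzero; lra).
    set (s := sum_n_m _ 1 n). toR.
    field. repeat split; try apply pow_nonzero; lra.
Qed.

Definition Qm (a k m : nat) : R :=
  match k with O => 0 | S _ => match m with O => 0 | S _ =>
    if Nat.eqb m k then 0 else (-1) ^ k / (INR k ^ (2 * a - 1) * (INR m ^ 2 - INR k ^ 2)) end end.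

Lemma Qm_col (a k m : nat) : (1 <= a)%nat -> (1 <= m)%nat ->
  Qm a k m = sum_n_m (fun i => / INR m ^ (2 * i) * Ai m (2 * a + 1 - 2 * i) k) 1 (a - 1)
             + / INR m ^ (2 * a) * (B1 m k + / 2 * B2 m k - / 2 * B3 m k).
Proof.
  intros Ha Hm. destruct k as [|k'].
  - simpl. rewrite (sum_ext _ (fun _ => 0)) by (intro; simpl; ring).
    rewrite (sum_ext (fun _ => 0) (fun i => 0 * 0)) by (intro; ring).
    rewrite sum_n_m_Rmult_l. ring.
  - set (k := S k') in *. unfold Qm, B1, B2, B3, Ai. destruct m as [|m']; [lia|].
    set (m := S m') in *. unfold k.
    destruct (Nat.eqb_spec m (S k')) as [E | E].
    + rewrite <- E, Nat.eqb_refl.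
      rewrite (sum_ext (fun i => / INR m ^ (2 * i) * 0) (fun i => 0 * 0)) by (intro; ring).
      rewrite sum_n_m_Rmult_l. ring.
    + destruct (Nat.eqb_spec (S k') m) as [E'|E']; [lia|].
      fold k.
      assert (Hk : 0 < INR k) by (apply lt_0_INR; unfold k; lia).
      assert (Hm0 : 0 < INR m) by (apply lt_0_INR; unfold m; lia).
      assert (Hne : INR k <> INR m) by (intro H; apply INR_eq in H; unfold k, m in *; lia).
      destruct a as [|n]; [lia|].
      replace (2 * S n - 1)%nat with (2 * n + 1)%nat by lia.
      unfold Rdiv. rewrite Rmult_comm, PF by auto.
      replace (S n - 1)%nat with n by lia.
      replace (2 * S n)%nat with (2 * n + 2)%nat by lia.
      rewrite Rmult_plus_distr_r, <- sum_n_m_Rmult_r.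
      f_equal.
      * apply sum_ext_loc. intros i Hi.
        replace (2 * n + 2 + 1 - 2 * i)%nat with (2 * n + 3 - 2 * i)%nat by lia. ring.
      * unfold Phi. ring.
Qed.


Definition hpad (n : nat) : R := match n with O => 0 | S _ => G 1 n / INR n ^ 2 end.

Lemma G1_nonneg n : 0 <= G 1 n.
Proof. induction n. - rewrite G_0; lra. - rewrite G_S, pow1. pose proof (INR_S_pos n).
  unfold Rdiv. rewrite Rmult_1_l. pose proof (Rinv_0_lt_compat _ H). lra. Qed.

Lemma hsum_aux N : (1 <= N)%nat -> sum_n hpad N + 2 * (G 1 N + 1) / INR N <= 5.
Proof.
  intro HN. induction HN.
  - unfold sum_n. rewrite sum_Sn_m by lia. rewrite sum_n_n. simpl. unfold G.
    rewrite sum_n_n. simpl. unfold plus. simpl. lra.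
  - rewrite sumn_S. unfold hpad at 2. rewrite G_S, pow1.
    set (h := G 1 m) in *. assert (Hh : 0 <= h) by apply G1_nonneg.
    assert (Hm : 1 <= INR m) by (apply (le_INR 1); lia).
    rewrite S_INR in *.
    assert (Key : (h + 1 / (INR m + 1)) / (INR m + 1) ^ 2 + 2 * (h + 1 / (INR m + 1) + 1) / (INR m + 1)
                  <= 2 * (h + 1) / INR m).
    { set (x := INR m) in *.
      assert (E : 2 * (h + 1) / x - ((h + 1 / (x + 1)) / (x + 1) ^ 2 + 2 * (h + 1 / (x + 1) + 1) / (x + 1))
                  = (x + 2) * (h * (x + 1) + 1) / (x * (x + 1) ^ 3)) by (field; lra).
      assert (0 <= (x + 2) * (h * (x + 1) + 1) / (x * (x + 1) ^ 3)).
      { unfold Rdiv. apply Rmult_le_pos.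
        - apply Rmult_le_pos; [lra|]. assert (0 <= h * (x + 1)) by (apply Rmult_le_pos; lra). lra.
        - left. apply Rinv_0_lt_compat. apply Rmult_lt_0_compat; [lra | apply pow_lt; lra]. }
      lra. }
    lra.
Qed.

Lemma hsum N : sum_n hpad N <= 5.
Proof.
  destruct N. - rewrite sumn_0. simpl. lra.
  - assert (H := hsum_aux (S N) ltac:(lia)).
    assert (0 <= 2 * (G 1 (S N) + 1) / INR (S N)).
    { unfold Rdiv. apply Rmult_le_pos; [pose proof (G1_nonneg (S N)); lra | left; apply Rinv_0_lt_compat, INR_S_pos]. }
    lra.
Qed.

Definition w1 (k m : nat) : R :=
  if andb (Nat.leb 1 k) (Nat.ltb k m) then / INR m ^ 2 * (/ INR k + / (INR m - INR k)) else 0.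

Lemma w1_nonneg k m : 0 <= w1 k m.
Proof.
  unfold w1. destruct (Nat.leb_spec 1 k); destruct (Nat.ltb_spec k m); simpl; try lra.
  assert (0 < INR k) by (apply lt_0_INR; lia).
  assert (INR k < INR m) by (apply lt_INR; lia).
  apply Rmult_le_pos.
  - left. apply Rinv_0_lt_compat. nra.
  - assert (0 < / INR k) by (apply Rinv_0_lt_compat; lra).
    assert (0 < / (INR m - INR k)) by (apply Rinv_0_lt_compat; lra). lra.
Qed.

Lemma absQ_half (c : nat) (x y : R) : (1 <= c)%nat -> 1 <= x -> x < y ->
  / (x ^ c * (y ^ 2 - x ^ 2)) <= / y ^ 2 * (/ x + / (y - x)).
Proof.
  intros Hc Hx Hxy.
  assert (Hxc : x <= x ^ c) by (rewrite <- (pow_1 x) at 1; apply Rle_pow; auto).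
  replace (/ y ^ 2 * (/ x + / (y - x))) with (/ (y * x * (y - x))) by (field; repeat split; lra).
  apply Rinv_le_contravar.
  - apply Rmult_lt_0_compat; [apply Rmult_lt_0_compat|]; lra.
  - replace (y ^ 2 - x ^ 2) with ((y - x) * (y + x)) by ring.
    apply Rle_trans with (x * ((y - x) * (y + x))).
    + replace (y * x * (y - x)) with (x * ((y - x) * y)) by ring.
      apply Rmult_le_compat_l; [lra|]. apply Rmult_le_compat_l; lra.
    + apply Rmult_le_compat_r; [|lra]. apply Rmult_le_pos; lra.
Qed.

Lemma absQ_le a k m : (1 <= a)%nat -> Rabs (Qm a k m) <= w1 k m + w1 m k.
Proof.
  intro Ha. pose proof (w1_nonneg k m). pose proof (w1_nonneg m k).
  unfold Qm. destruct k as [|k']; [rewrite Rabs_R0; lra|]. destruct m as [|m']; [rewrite Rabs_R0; lra|].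
  destruct (Nat.eqb_spec (S m') (S k')); [rewrite Rabs_R0; lra|].
  unfold Rdiv. rewrite Rabs_mult, pow_1_abs, Rmult_1_l.
  assert (Hk : 1 <= INR (S k')) by (apply (le_INR 1); lia).
  assert (Hm : 1 <= INR (S m')) by (apply (le_INR 1); lia).
  destruct (Nat.lt_ge_cases k' m') as [Hlt | Hge].
  - assert (Hxy : INR (S k') < INR (S m')) by (apply lt_INR; lia).
    assert (Hw : w1 (S k') (S m') = / INR (S m') ^ 2 * (/ INR (S k') + / (INR (S m') - INR (S k')))).
    { unfold w1. destruct (Nat.leb_spec 1 (S k')); [|lia]. destruct (Nat.ltb_spec (S k') (S m')); [|lia]. reflexivity. }
    rewrite Hw.
    assert (Hpos : 0 < INR (S k') ^ (2 * a - 1) * (INR (S m') ^ 2 - INR (S k') ^ 2)).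
    { apply Rmult_lt_0_compat; [apply pow_lt; lra | nra]. }
    rewrite Rabs_inv, Rabs_pos_eq by lra.
    assert (A := absQ_half (2 * a - 1) _ _ ltac:(lia) Hk Hxy). lra.
  - assert (Hxy : INR (S m') < INR (S k')) by (apply lt_INR; lia).
    assert (Hw : w1 (S m') (S k') = / INR (S k') ^ 2 * (/ INR (S m') + / (INR (S k') - INR (S m')))).
    { unfold w1. destruct (Nat.leb_spec 1 (S m')); [|lia]. destruct (Nat.ltb_spec (S m') (S k')); [|lia]. reflexivity. }
    apply Rle_trans with (w1 (S m') (S k')); [| lra]. rewrite Hw.
    assert (Hpos : 0 < INR (S k') ^ (2 * a - 1) * (INR (S k') ^ 2 - INR (S m') ^ 2)).
    { apply Rmult_lt_0_compat; [apply pow_lt; lra | nra]. }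
    replace (INR (S k') ^ (2 * a - 1) * (INR (S m') ^ 2 - INR (S k') ^ 2))
      with (- (INR (S k') ^ (2 * a - 1) * (INR (S k') ^ 2 - INR (S m') ^ 2))) by ring.
    rewrite Rabs_inv, Rabs_Ropp, Rabs_pos_eq by lra.
    assert (Hxc : INR (S k') <= INR (S k') ^ (2 * a - 1)) by (rewrite <- (pow_1 (INR (S k'))) at 1; apply Rle_pow; auto; lia).
    set (x := INR (S k')) in *. set (y := INR (S m')) in *.
    replace (/ x ^ 2 * (/ y + / (x - y))) with (/ (x * y * (x - y))) by (field; repeat split; lra).
    apply Rinv_le_contravar.
    + apply Rmult_lt_0_compat; [apply Rmult_lt_0_compat|]; lra.
    + replace (x ^ 2 - y ^ 2) with ((x - y) * (x + y)) by ring.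
      apply Rle_trans with (x * ((x - y) * (x + y))).
      * replace (x * y * (x - y)) with (x * ((x - y) * y)) by ring.
        apply Rmult_le_compat_l; [lra|]. apply Rmult_le_compat_l; lra.
      * apply Rmult_le_compat_r; [|lra]. apply Rmult_le_pos; lra.
Qed.


Lemma sum_n_stable (f : nat -> R) n0 N : (forall k, (n0 < k)%nat -> f k = 0) -> (n0 <= N)%nat ->
  sum_n f N = sum_n f n0.
Proof.
  intros Hf HN. induction HN. - reflexivity. - rewrite sumn_S, IHHN, Hf by lia. Rring.
Qed.

Lemma sumn_zero N : sum_n (fun _ => 0) N = 0.
Proof. induction N. - rewrite sumn_0; reflexivity. - rewrite sumn_S, IHN. Rring. Qed.

Lemma sumn_scal c (f : nat -> R) N : sum_n (fun n => c * f n) N = c * sum_n f N.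
Proof. induction N. - rewrite !sumn_0; reflexivity. - rewrite !sumn_S, IHN. Rring. Qed.

Lemma G1_mono n : G 1 n <= G 1 (S n).
Proof. rewrite G_S, pow1. pose proof (INR_S_pos n). unfold Rdiv. rewrite Rmult_1_l.
  pose proof (Rinv_0_lt_compat _ H). lra. Qed.

Lemma inner_w1 m N : sum_n (fun k => w1 k m) N <= 2 * hpad m.
Proof.
  destruct m as [|m'].
  - rewrite (sum_n_ext _ (fun _ => 0)).
    + rewrite sumn_zero. simpl. lra.
    + intro k. unfold w1. destruct (Nat.ltb_spec k 0); [lia|]. rewrite Bool.andb_false_r. reflexivity.
  - apply Rle_trans with (sum_n (fun k => w1 k (S m')) (N + m')).
    { apply sumn_mono; [intro; apply w1_nonneg | lia]. }
    rewrite (sum_n_stable _ m' (N + m')).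
    2:{ intros k Hk. unfold w1. destruct (Nat.ltb_spec k (S m')); [lia|]. rewrite Bool.andb_false_r. reflexivity. }
    2: lia.
    rewrite sum_n_pad by reflexivity.
    rewrite (sum_ext_loc _ (fun k => / INR (S m') ^ 2 * (/ INR k + / (INR (S m') - INR k)))).
    2:{ intros k Hk. unfold w1. destruct (Nat.leb_spec 1 k); [|lia]. destruct (Nat.ltb_spec k (S m')); [|lia]. reflexivity. }
    rewrite sum_n_m_Rmult_l, sum_n_m_Rplus.
    rewrite (sum_n_m_rev (fun k => / (INR (S m') - INR k))).
    rewrite (sum_ext_loc (fun t => / (INR (S m') - INR (S m' - t))) (fun t => 1 ^ t / INR t)).
    2:{ intros t Ht. rewrite minus_INR by lia. rewrite pow1. unfold Rdiv. rewrite Rmult_1_l. f_equal. ring. }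
    rewrite (sum_ext (fun k => / INR k) (fun t => 1 ^ t / INR t)) by (intro; rewrite pow1; unfold Rdiv; ring).
    fold (G 1 m'). unfold hpad.
    assert (H := G1_mono m').
    assert (0 < / INR (S m') ^ 2) by (apply Rinv_0_lt_compat, pow_lt, INR_S_pos).
    unfold Rdiv. nra.
Qed.

Lemma rect_plus (f g : nat -> nat -> R) K M : rect (fun k m => f k m + g k m) K M = rect f K M + rect g K M.
Proof.
  unfold rect. rewrite (sum_n_ext _ (fun k => sum_n (f k) M + sum_n (g k) M)).
  - apply (sum_n_plus (fun k => sum_n (f k) M) (fun k => sum_n (g k) M)).
  - intro k. apply (sum_n_plus (f k) (g k)).
Qed.

Lemma rect_mono (b : nat -> nat -> R) K M K' M' : (forall k m, 0 <= b k m) -> (K <= K')%nat -> (M <= M')%nat ->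
  rect b K M <= rect b K' M'.
Proof.
  intros Hb HK HM. unfold rect. apply Rle_trans with (sum_n (fun k => sum_n (fun m => b k m) M') K).
  - apply sumn_le. intro k. apply sumn_mono; auto.
  - apply sumn_mono; auto. intro; apply sumn_nonneg; auto.
Qed.

Lemma rect_w1 N : rect w1 N N <= 10.
Proof.
  rewrite rect_switch. unfold rect.
  apply Rle_trans with (sum_n (fun m => 2 * hpad m) N).
  - apply sumn_le. intro m. apply inner_w1.
  - rewrite sumn_scal. pose proof (hsum N). lra.
Qed.

Lemma rect_Q a K M : (1 <= a)%nat -> rect (fun k m => Rabs (Qm a k m)) K M <= 20.
Proof.
  intro Ha.
  apply Rle_trans with (rect (fun k m => w1 k m + w1 m k) K M).
  { unfold rect. apply sumn_le; intro k; apply sumn_le; intro m. apply absQ_le, Ha. }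
  rewrite rect_plus. rewrite (rect_switch (fun k m => w1 m k)).
  assert (A1 : rect w1 K M <= 10).
  { eapply Rle_trans; [apply (rect_mono _ K M (K + M) (K + M)); [intros; apply w1_nonneg | lia | lia] | apply rect_w1]. }
  assert (A2 : rect (fun m k => w1 m k) M K <= 10).
  { change (rect w1 M K <= 10). eapply Rle_trans; [apply (rect_mono _ M K (K + M) (K + M)); [intros; apply w1_nonneg | lia | lia] | apply rect_w1]. }
  lra.
Qed.


Lemma ser_fin_loc (f : nat -> nat -> R) (l : nat -> R) p q :
  (forall i, (p <= i <= q)%nat -> is_series (f i) (l i)) ->
  is_series (fun n => sum_n_m (fun i => f i n) p q) (sum_n_m l p q).
Proof.
  intro H. destruct (Compare_dec.le_lt_dec p q) as [Hpq | Hpq].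
  - induction Hpq.
    + apply (ser_ext (f p)); [intro; rewrite sum_n_n; reflexivity|]. rewrite sum_n_n. apply H; lia.
    + rewrite sum_n_m_Sr by lia. apply (ser_ext (fun n => sum_n_m (fun i => f i n) p m + f (S m) n)).
      { intro; rewrite sum_n_m_Sr by lia; reflexivity. }
      apply ser_plus; [apply IHHpq; intros; apply H; lia | apply H; lia].
  - rewrite sum0 by lia. apply (ser_ext (fun _ => 0)); [intro; rewrite sum0 by lia; reflexivity|]. apply ser_zero.
Qed.

Section Main.
Variable a : nat.
Hypothesis Ha : (1 <= a)%nat.

Definition rr (k : nat) : R := match k with O => 0 | S _ => (-1) ^ k / INR k ^ (2 * a - 1) * (3 / (4 * INR k ^ 2)) end.

Lemma row_is k : is_series (Qm a k) (rr k).
Proof.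
  destruct k as [|k'].
  - apply (ser_ext (fun _ => 0)); [intro; reflexivity | apply ser_zero].
  - apply (ser_ext (fun m => ((-1) ^ S k' / INR (S k') ^ (2 * a - 1)) * qrow (S k') m)).
    + intro m. unfold Qm, qrow. destruct m as [|m']; simpl Nat.eqb; cbv iota beta; [ring|].
      destruct (Nat.eqb m' k'); cbv iota beta; [ring|]. unfold Rdiv. rewrite Rinv_mult. ring.
    + apply ser_scal, row_series. lia.
Qed.

Lemma rr_is : is_series rr (3 / 4 * - altzeta (2 * a + 1)).
Proof.
  apply (ser_ext (fun k => 3 / 4 * ep (2 * a + 1) k)).
  - intro k. destruct k as [|k']; [simpl; ring|]. unfold ep, rr.
    replace (2 * a + 1)%nat with ((2 * a - 1) + 2)%nat by lia. rewrite pow_add.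
    assert (INR (S k') <> 0) by (apply not_0_INR; lia).
    assert (INR (S k') ^ (2 * a - 1) <> 0) by (apply pow_nonzero; auto).
    field. split; auto.
  - apply ser_scal, ep_is. lia.
Qed.

Definition Cm (m : nat) : R :=
  sum_n_m (fun i => / INR m ^ (2 * i) * (- altzeta (2 * a + 1 - 2 * i) - (-1) ^ m / INR m ^ (2 * a + 1 - 2 * i))) 1 (a - 1)
  + / INR m ^ (2 * a) * ((- ln 2 - (-1) ^ m / INR m) + / 2 * ((-1) ^ m * (G (-1) (m - 1) + ln 2))
                         - / 2 * ((-1) ^ m * (- ln 2 - G (-1) m) - (-1) ^ m / (2 * INR m))).

Definition cc (m : nat) : R := match m with O => 0 | S _ => Cm m end.

Lemma col_is m : is_series (fun k => Qm a k m) (cc m).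
Proof.
  destruct m as [|m'].
  - apply (ser_ext (fun _ => 0)); [intro k; unfold Qm; destruct k; reflexivity | apply ser_zero].
  - set (m := S m'). assert (Hm : (1 <= m)%nat) by (unfold m; lia).
    apply (ser_ext (fun k => sum_n_m (fun i => / INR m ^ (2 * i) * Ai m (2 * a + 1 - 2 * i) k) 1 (a - 1)
             + / INR m ^ (2 * a) * (B1 m k + / 2 * B2 m k - / 2 * B3 m k))).
    { intro k. symmetry. apply Qm_col; auto. }
    unfold cc, Cm. fold m.
    apply ser_plus.
    + apply ser_fin_loc. intros i Hi. apply ser_scal. apply Ai_is; auto. lia.
    + apply ser_scal. apply ser_minus; [apply ser_plus|].
      * apply B1_is; auto.
      * apply ser_scal, B2_is; auto.
      * apply ser_scal, B3_is; auto.
Qed.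

Lemma cc_is : is_series cc (3 / 4 * - altzeta (2 * a + 1)).
Proof.
  apply (fubini (Qm a) 20 rr cc).
  - intros K M. apply rect_Q, Ha.
  - apply row_is.
  - apply col_is.
  - apply rr_is.
Qed.

Definition Fp (m : nat) : R := match m with O => 0 | S _ => (-1) ^ m * G (-1) m / INR m ^ (2 * a) end.

Lemma Fp_ex : ex_series Fp.
Proof.
  apply (@ex_series_le R_AbsRing R_CompleteNormedModule _ (fun m => 5 * zp (2 * a) m)).
  - intro m. change (norm (Fp m)) with (Rabs (Fp m)). destruct m as [|m'].
    + simpl. rewrite Rabs_R0. lra.
    + unfold Fp, zp. unfold Rdiv. rewrite !Rabs_mult, pow_1_abs, Rmult_1_l.
      assert (0 < / INR (S m') ^ (2 * a)) by (apply Rinv_0_lt_compat, pow_lt, INR_S_pos).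
      rewrite (Rabs_pos_eq (/ _)) by lra.
      apply Rmult_le_compat_r; [lra | apply Gm1_bound].
  - exists (5 * zeta (2 * a)). apply ser_scal, zp_is. lia.
Qed.

Lemma pow_m1_cases n : (-1) ^ n = 1 \/ (-1) ^ n = -1.
Proof. induction n. - left; simpl; ring. - simpl. destruct IHn as [E|E]; rewrite E; [right|left]; ring. Qed.

Lemma cc_components m : cc m =
  sum_n_m (fun i => - altzeta (2 * a + 1 - 2 * i) * zp (2 * i) m - ep (2 * a + 1) m) 1 (a - 1)
  + (- ln 2 * zp (2 * a) m + ln 2 * ep (2 * a) m + Fp m - / 2 * zp (2 * a + 1) m - 3 / 4 * ep (2 * a + 1) m).
Proof.
  destruct m as [|m'].
  - simpl. rewrite (sum_ext _ (fun _ => 0 * 0)) by (intro; simpl; ring). rewrite sum_n_m_Rmult_l. ring.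
  - unfold cc, Cm, zp, ep, Fp. set (m := S m').
    assert (Hm : INR m <> 0) by (apply not_0_INR; unfold m; lia).
    f_equal.
    + apply sum_ext_loc. intros i Hi.
      assert (EP : INR m ^ (2 * a + 1) = INR m ^ (2 * i) * INR m ^ (2 * a + 1 - 2 * i))
        by (rewrite <- pow_add; f_equal; lia).
      rewrite EP.
      assert (INR m ^ (2 * i) <> 0) by (apply pow_nonzero; auto).
      assert (INR m ^ (2 * a + 1 - 2 * i) <> 0) by (apply pow_nonzero; auto).
      field. auto.
    + replace (m - 1)%nat with m' by (unfold m; lia).
      assert (EG : G (-1) m' = G (-1) m - (-1) ^ m / INR m) by (unfold m; rewrite G_S; ring).
      rewrite EG.
      rewrite (pow_add (INR m) (2 * a) 1), pow_1.
      assert (INR m ^ (2 * a) <> 0) by (apply pow_nonzero; auto).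
      destruct (pow_m1_cases m) as [E|E]; rewrite E; field; auto.
Qed.

Definition Tm : R :=
  sum_n_m (fun i => - altzeta (2 * a + 1 - 2 * i) * zeta (2 * i) - - altzeta (2 * a + 1)) 1 (a - 1)
  + (- ln 2 * zeta (2 * a) + ln 2 * - altzeta (2 * a) + Series Fp - / 2 * zeta (2 * a + 1)
     - 3 / 4 * - altzeta (2 * a + 1)).

Lemma Tm_is : is_series cc Tm.
Proof.
  apply (ser_ext _ _ _ (fun m => eq_sym (cc_components m))).
  unfold Tm. apply ser_plus.
  - apply ser_fin_loc. intros i Hi. apply ser_minus.
    + apply ser_scal, zp_is. lia.
    + apply ep_is. lia.
  - apply ser_minus; [apply ser_minus; [apply ser_plus; [apply ser_plus|] |] |].
    + apply ser_scal, zp_is. lia.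
    + apply ser_scal, ep_is. lia.
    + apply Series_correct, Fp_ex.
    + apply ser_scal, zp_is. lia.
    + apply ser_scal, ep_is. lia.
Qed.

Lemma Tm_eq : Tm = 3 / 4 * - altzeta (2 * a + 1).
Proof.
  rewrite <- (is_series_unique _ _ Tm_is). apply is_series_unique, cc_is.
Qed.

Definition orig (m : nat) : R := (-1) ^ (S m) * altH (2 * a) m / INR (S m).

Lemma altH_0 b : altH b 0 = 0.
Proof. unfold altH. apply sum0. lia. Qed.

Lemma altH_S b n : altH b (S n) = altH b n + (-1) ^ n / INR (S n) ^ b.
Proof. unfold altH. rewrite sum_n_m_Sr by lia. replace (S n - 1)%nat with n by lia. reflexivity. Qed.

Lemma altH_sum b M : altH b (S M) = sum_n (fun m => (-1) ^ m / INR (S m) ^ b) M.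
Proof.
  induction M.
  - rewrite sumn_0, altH_S, altH_0. ring.
  - rewrite sumn_S, <- IHM, altH_S. reflexivity.
Qed.

Definition xk (k : nat) : R := (-1) ^ (k - 1) / INR k ^ (2 * a).

Lemma orig_partial M : sum_n orig M =
  G (-1) (S M) * altH (2 * a) (S M) - sum_n_m (fun k => xk k * G (-1) k) 1 (S M).
Proof.
  induction M.
  - rewrite sumn_0. unfold orig. rewrite altH_0, altH_S, altH_0.
    unfold G, xk. rewrite !sum_n_n. simpl. rewrite !pow1. field.
  - rewrite sumn_S, IHM. rewrite (sum_n_m_Sr _ 1 (S M)) by lia.
    rewrite (altH_S _ (S M)), (G_S _ (S M)). unfold orig, xk.
    replace (S (S M) - 1)%nat with (S M) by lia.
    assert (INR (S (S M)) <> 0) by (apply not_0_INR; lia).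
    assert (INR (S (S M)) ^ (2 * a) <> 0) by (apply pow_nonzero; auto).
    Rfield. auto.
Qed.

Lemma orig_is : is_series orig (Series Fp - ln 2 * altzeta (2 * a)).
Proof.
  apply series_lim. eapply is_lim_seq_ext. { intro M. symmetry. apply orig_partial. }
  replace (Series Fp - ln 2 * altzeta (2 * a)) with ((- ln 2) * altzeta (2 * a) - (- Series Fp)) by ring.
  apply is_lim_seq_minus'.
  - apply is_lim_seq_mult'.
    + apply (is_lim_seq_incr_1 (G (-1))). apply alt_harm_lim.
    + eapply is_lim_seq_ext. { intro M. symmetry. apply altH_sum. }
      apply series_lim. apply altzeta_is. lia.
  - apply (is_lim_seq_ext (fun M => sum_n (fun n => xk (S n) * G (-1) (S n)) M)).
    { intro M. unfold sum_n. symmetry. rewrite <- (sum_n_m_S (fun k => xk k * G (-1) k) 0 M). reflexivity. }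
    apply series_lim.
    apply (ser_ext (fun n => - Fp (S n))).
    { intro n. unfold Fp, xk. replace (S n - 1)%nat with n by lia. simpl pow at 1. field.
      apply pow_nonzero, not_0_INR; lia. }
    apply ser_opp. apply is_series_incr_1.
    change (plus (Series Fp) (Fp 0%nat)) with (Series Fp + 0). rewrite Rplus_0_r.
    apply Series_correct, Fp_ex.
Qed.

End Main.



Theorem mainTheorem8 (a : nat) (ha : (1 <= a)%nat) :
  is_series (fun m : nat => (-1) ^ (S m) * altH (2 * a) m / INR (S m))
    (/ 2 * zeta (2 * a + 1)
     - (INR a + / 2) * altzeta (2 * a + 1)
     + ln 2 * zeta (2 * a)
     + sum_n_m (fun j => altzeta (2 * j + 1) * zeta (2 * a - 2 * j)) 1 (a - 1)).
Proof.
  assert (H := orig_is a ha). unfold orig in H.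
  assert (T := Tm_eq a ha). unfold Tm in T.
  set (E := altzeta (2 * a + 1)) in *.
  rewrite (sum_ext _ (fun i => (- (altzeta (2 * a + 1 - 2 * i) * zeta (2 * i))) + E)) in T by (intro; ring).
  rewrite sum_n_m_Rplus, sum_n_m_Ropp, sum_n_m_const in T.
  replace (S (a - 1) - 1)%nat with (a - 1)%nat in T by lia.
  rewrite minus_INR in T by lia. simpl INR in T.
  assert (R : sum_n_m (fun i => altzeta (2 * a + 1 - 2 * i) * zeta (2 * i)) 1 (a - 1)
            = sum_n_m (fun j => altzeta (2 * j + 1) * zeta (2 * a - 2 * j)) 1 (a - 1)).
  { rewrite sum_n_m_rev. apply sum_ext_loc. intros t Ht.
    replace (2 * a + 1 - 2 * (S (a - 1) - t))%nat with (2 * t + 1)%nat by lia.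
    replace (2 * (S (a - 1) - t))%nat with (2 * a - 2 * t)%nat by lia. reflexivity. }
  rewrite R in T.
  eapply is_series_ext; [intro; reflexivity|].
  replace (/ 2 * zeta (2 * a + 1) - (INR a + / 2) * E + ln 2 * zeta (2 * a) +
     sum_n_m (fun j => altzeta (2 * j + 1) * zeta (2 * a - 2 * j)) 1 (a - 1))
    with (Series (Fp a) - ln 2 * altzeta (2 * a)).
  - exact H.
  - toR. lra.
Qed.
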